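(* \begin{align*} &\int_{0}^{\frac{\pi}{2}}\frac{\phi(2\cos \phi-1)}{5-4\cos \phi}\,\mathrm{d}\phi=-\frac{1}{12}\pi^{2}+\frac{1}{2}\log^{2}2+\frac{\pi}{2}\arctan{\frac{1}{2}}+\frac{1}{4}\mathrm{Li}_{2}\Big(-\frac{1}{4}\Big)\,,\\ &\int_{0}^{\frac{\pi}{2}}\frac{2\phi\sin \phi}{5-4\cos \phi}\,\mathrm{d}\phi=\frac{\pi}{4}\log\frac{5}{4}+\mathrm{Ti}_{2}\Big(\frac{1}{2}\Big)\,. \end{align*}
   Context: $\mathrm{Li}_2(x)=\sum_{n\ge1}x^n/n^2$ for $|x|\le1$ is the dilogarithm, and $\mathrm{Ti}_{2}(x)=\int_{0}^{x}\frac{\arctan y}{y}\,\mathrm{d}y$ is the inverse tangent integral. *)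

(* Defs.v *)
From Stdlib Require Import Reals.
From Coquelicot Require Import Coquelicot.
Open Scope R_scope.

(* Dilogarithm: Li2 x = sum_{n>=1} x^n / n^2 (meaningful for |x| <= 1). *)
Definition Li2 (x : R) : R :=
  Series (fun n : nat => x ^ (S n) / (INR (S n)) ^ 2).

Definition Ti2 (x : R) : R :=
  RInt (fun y => atan y / y) 0 x.

(* Main.v *)
Require Import Defs.
From Stdlib Require Import Reals.
From Coquelicot Require Import Coquelicot.
From Stdlib Require Import Lra Lia.
Open Scope R_scope.



Definition lb (n : nat) : R := / (INR (S n)) ^ 2.
Definition la : nat -> R := PS_incr_1 lb.

Lemma Li2_PS x : Li2 x = PSeries la x.
Proof.
  unfold la. rewrite PSeries_incr_1. unfold PSeries, Li2.
  rewrite <- Series_scal_l. apply Series_ext. intros n. unfold lb. change (x ^ S n) with (x * x ^ n). field.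
  apply not_0_INR. lia.
Qed.

Lemma CV_lb : CV_radius lb = 1.
Proof.
  replace 1 with (/ 1) by field.
  apply CV_radius_finite_DAlembert.
  - intros n. unfold lb. apply Rinv_neq_0_compat. apply pow_nonzero. apply not_0_INR. lia.
  - lra.
  - assert (Hw : is_lim_seq (fun n => 1 - / INR (S (S n))) 1).
    { replace (Finite 1) with (Finite (1 - 0)) by (f_equal; ring).
      apply is_lim_seq_minus' . apply is_lim_seq_const.
      replace (Finite 0) with (Rbar_inv p_infty) by reflexivity.
      apply is_lim_seq_inv. 2: discriminate.
      apply is_lim_seq_ext with (fun n => INR (n + 2)).
      intros n; f_equal; lia.
      apply (is_lim_seq_incr_n INR 2). apply is_lim_seq_INR. }
    apply is_lim_seq_ext with (fun n => (1 - / INR (S (S n))) * (1 - / INR (S (S n)))).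
    + intros n. unfold lb. rewrite Rabs_pos_eq.
      * rewrite !S_INR. field. split; apply Rgt_not_eq; pose proof (pos_INR n); lra.
      * unfold Rdiv. apply Rmult_le_pos; left; repeat apply Rinv_0_lt_compat;
        apply pow_lt; apply lt_0_INR; lia.
    + replace (Finite 1) with (Finite (1 * 1)) by (f_equal; ring). apply is_lim_seq_mult'; exact Hw.
Qed.

Lemma CV_la : CV_radius la = 1.
Proof. unfold la. rewrite CV_radius_incr_1. exact CV_lb. Qed.

Definition L1 (x : R) : R := PSeries (PS_derive la) x.

Lemma in_disk x : Rabs x < 1 -> Rbar_lt (Rabs x) (CV_radius la).
Proof. rewrite CV_la. simpl. auto. Qed.

Lemma Li2_deriv x : Rabs x < 1 -> is_derive Li2 x (L1 x).
Proof.
  intros Hx. apply is_derive_ext with (PSeries la).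
  intros t; symmetry; apply Li2_PS.
  apply is_derive_PSeries. apply in_disk; auto.
Qed.

Lemma Li2_0 : Li2 0 = 0.
Proof. rewrite Li2_PS, PSeries_0. reflexivity. Qed.

Lemma L1_0 : L1 0 = 1.
Proof. unfold L1. rewrite PSeries_0. unfold PS_derive, la, PS_incr_1, lb. simpl. field. Qed.

Lemma const_deriv (f : R -> R) a b : a <= b ->
  (forall t, a <= t <= b -> is_derive f t 0) -> f a = f b.
Proof.
  intros Hab H. destruct Hab as [Hab|Hab].
  - apply (eq_is_derive f a b); auto.
  - subst; reflexivity.
Qed.

Definition lc : nat -> R := PS_incr_1 (PS_derive la).

Lemma lc_der n : PS_derive lc n = 1.
Proof.
  unfold lc, PS_derive, PS_incr_1, la, PS_incr_1, lb.
  field. apply not_0_INR. lia.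
Qed.

Lemma CV_lc : CV_radius lc = 1.
Proof. unfold lc. rewrite CV_radius_incr_1, CV_radius_derive. exact CV_la. Qed.

Lemma L1_ln x : Rabs x < 1 -> x * L1 x = - ln (1 - x).
Proof.
  intros Hx.
  assert (Hf : forall t, Rabs t < 1 -> is_derive (fun y => PSeries lc y + ln (1 - y)) t 0).
  { intros t Ht.
    assert (Ht' : 0 < 1 - t) by (apply Rabs_def2 in Ht; lra).
    replace 0 with (PSeries (PS_derive lc) t + (-1) / (1 - t)).
    - apply (is_derive_plus (fun y => PSeries lc y) (fun y => ln (1 - y))).
      + apply is_derive_PSeries. rewrite CV_lc. simpl; auto.
      + auto_derive. lra. field. lra.
    - unfold PSeries. rewrite (Series_ext _ (fun k => t ^ k)).
      2: { intros k. rewrite lc_der. ring. }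
      rewrite Series_geom; auto. field. lra. }
  assert (Hval : forall y, PSeries lc y = y * L1 y).
  { intros y. unfold lc, L1. apply PSeries_incr_1. }
  assert (H0 : PSeries lc 0 + ln (1 - 0) = 0).
  { rewrite PSeries_0. unfold lc. cbn [PS_incr_1]. rewrite Rminus_0_r, ln_1. apply Rplus_0_r. }
  assert (Hr : forall t, Rmin 0 x <= t <= Rmax 0 x -> Rabs t < 1).
  { intros t Ht. apply Rabs_def2 in Hx. unfold Rmin, Rmax in Ht.
    apply Rabs_def1; destruct (Rle_dec 0 x); lra. }
  assert (E : PSeries lc 0 + ln (1 - 0) = PSeries lc x + ln (1 - x)).
  { destruct (Rle_dec 0 x) as [Hp|Hn].
    - apply (const_deriv (fun y => PSeries lc y + ln (1 - y)) 0 x Hp).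
      intros t Ht. apply Hf, Hr. rewrite Rmin_left, Rmax_right; lra.
    - symmetry. apply (const_deriv (fun y => PSeries lc y + ln (1 - y)) x 0). lra.
      intros t Ht. apply Hf, Hr. rewrite Rmin_right, Rmax_left; lra. }
  rewrite H0, Hval in E. lra.
Qed.

Lemma lin2 (f g : R -> R) a b (al be v : R) :
  ex_RInt f a b -> ex_RInt g a b ->
  is_RInt (fun x => al * f x + be * g x) a b v ->
  al * RInt f a b + be * RInt g a b = v.
Proof.
  intros Hf Hg H. pose proof (is_RInt_unique (V := R_CompleteNormedModule) _ _ _ _ H) as H'. rewrite <- H'. symmetry.
  apply is_RInt_unique.
  apply (is_RInt_plus (V:=R_NormedModule) (fun x => scal al (f x)) (fun x => scal be (g x))).
  apply (is_RInt_scal (V:=R_NormedModule)); apply (RInt_correct (V:=R_CompleteNormedModule)), Hf.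
  apply (is_RInt_scal (V:=R_NormedModule)); apply (RInt_correct (V:=R_CompleteNormedModule)), Hg.
Qed.

Lemma lin3 (f g h : R -> R) a b (al be ga v : R) :
  ex_RInt f a b -> ex_RInt g a b -> ex_RInt h a b ->
  is_RInt (fun x => al * f x + be * g x + ga * h x) a b v ->
  al * RInt f a b + be * RInt g a b + ga * RInt h a b = v.
Proof.
  intros Hf Hg Hh H. pose proof (is_RInt_unique (V := R_CompleteNormedModule) _ _ _ _ H) as H'. rewrite <- H'. symmetry.
  apply is_RInt_unique.
  apply (is_RInt_plus (V:=R_NormedModule) (fun x => plus (scal al (f x)) (scal be (g x))) (fun x => scal ga (h x))).
  apply (is_RInt_plus (V:=R_NormedModule) (fun x => scal al (f x)) (fun x => scal be (g x))).
  apply (is_RInt_scal (V:=R_NormedModule)); apply (RInt_correct (V:=R_CompleteNormedModule)), Hf.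
  apply (is_RInt_scal (V:=R_NormedModule)); apply (RInt_correct (V:=R_CompleteNormedModule)), Hg.
  apply (is_RInt_scal (V:=R_NormedModule)); apply (RInt_correct (V:=R_CompleteNormedModule)), Hh.
Qed.

Lemma cont_of_der (f : R -> R) x : ex_derive f x -> continuous f x.
Proof. intros H. exact (ex_derive_continuous (K:=R_AbsRing) (V:=R_NormedModule) f x H). Qed.

Lemma FTC (F f : R -> R) a b :
  (forall x, Rmin a b <= x <= Rmax a b -> is_derive F x (f x)) ->
  (forall x, Rmin a b <= x <= Rmax a b -> continuous f x) ->
  is_RInt f a b (F b - F a).
Proof. intros H1 H2. exact (is_RInt_derive (V:=R_CompleteNormedModule) F f a b H1 H2). Qed.

Lemma FTC' (F f : R -> R) a b v :
  (forall x, Rmin a b <= x <= Rmax a b -> is_derive F x (f x)) ->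
  (forall x, Rmin a b <= x <= Rmax a b -> continuous f x) ->
  F b - F a = v -> is_RInt f a b v.
Proof. intros H1 H2 <-. apply FTC; auto. Qed.

Definition Ic (n : nat) : R := RInt (fun x => cos x ^ (2 * n)) 0 (PI / 2).
Definition Jc (n : nat) : R := RInt (fun x => x ^ 2 * cos x ^ (2 * n)) 0 (PI / 2).

Lemma ex_Ic k : ex_RInt (fun x => cos x ^ k) 0 (PI / 2).
Proof. apply (ex_RInt_continuous (V:=R_CompleteNormedModule)). intros z _. apply cont_of_der. auto_derive. auto. Qed.
Lemma ex_Jc k : ex_RInt (fun x => x ^ 2 * cos x ^ k) 0 (PI / 2).
Proof. apply (ex_RInt_continuous (V:=R_CompleteNormedModule)). intros z _. apply cont_of_der. auto_derive. auto. Qed.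

Lemma cos_PI2' : cos (PI / 2) = 0.
Proof. apply cos_PI2. Qed.

Lemma is_derive_val (f : R -> R) x l l' : is_derive f x l -> l = l' -> is_derive f x l'.
Proof. intros H <-; exact H. Qed.

Lemma sin2 x : sin x ^ 2 = 1 - cos x ^ 2.
Proof. pose proof (sin2_cos2 x); unfold Rsqr in *; nra. Qed.

Lemma der_sc k x : is_derive (fun x => sin x * cos x ^ (S k)) x
  (INR (S (S k)) * cos x ^ (S (S k)) - INR (S k) * cos x ^ k).
Proof.
  auto_derive. auto. cbn [Init.Nat.pred]. rewrite <- !tech_pow_Rmult.
  set (ck := cos x ^ k).
  change (match k with 0%nat => 1 | S _ => INR k + 1 end) with (INR (S k)). rewrite !S_INR.
  apply Rminus_diag_uniq.
  replace (_ - _) with ((sin x ^ 2 + cos x ^ 2 - 1) * (- (INR k + 1) * ck)) by ring.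
  rewrite sin2. ring.
Qed.

Lemma B1 m : INR (2 * m + 2) * Ic (S m) + (- INR (2 * m + 1)) * Ic m = 0.
Proof.
  unfold Ic. replace (2 * S m)%nat with (S (S (2 * m)))%nat by lia.
  replace (2 * m + 2)%nat with (S (S (2 * m)))%nat by lia.
  replace (2 * m + 1)%nat with (S (2 * m))%nat by lia.
  apply (lin2 (fun x => cos x ^ (S (S (2 * m)))) (fun x => cos x ^ (2 * m))).
  apply ex_Ic. apply ex_Ic.
  apply (FTC' (fun x => sin x * cos x ^ (S (2 * m)))).
  - intros x _. eapply is_derive_val. apply der_sc. simpl. ring.
  - intros x _. apply cont_of_der. auto_derive. auto.
  - rewrite cos_PI2', sin_0. rewrite pow_i by lia. ring.
Qed.

Lemma der2 k a x : 2 * a = INR (S (S k)) -> is_derive (fun x => x * cos x ^ S (S k) + a * (x ^ 2 * (sin x * cos x ^ S k))) x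
  (cos x ^ S (S k) + a * INR (S (S k)) * (x ^ 2 * cos x ^ S (S k)) - a * INR (S k) * (x ^ 2 * cos x ^ k)).
Proof.
  intros Ha.
  auto_derive. auto. cbn [Init.Nat.pred]. rewrite <- !tech_pow_Rmult.
  set (ck := cos x ^ k).
  change (match k with 0%nat => 1 | S _ => INR k + 1 end) with (INR (S k)). rewrite !S_INR.
  apply Rminus_diag_uniq.
  replace (_ - _) with ((2 * a - (INR k + 1 + 1)) * (x * sin x * cos x * ck) + (sin x ^ 2 + cos x ^ 2 - 1) * (- a * (INR k + 1) * x ^ 2 * ck)) by ring.
  rewrite sin2, Ha, !S_INR. ring.
Qed.

Lemma B2 m : 1 * Ic (S m) + (2 * INR (S m) ^ 2) * Jc (S m) + (- (INR (S m) * INR (S (2 * m)))) * Jc m = 0.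
Proof.
  unfold Ic, Jc. replace (2 * S m)%nat with (S (S (2 * m)))%nat by lia.
  apply (lin3 (fun x => cos x ^ (S (S (2 * m)))) (fun x => x ^ 2 * cos x ^ (S (S (2 * m))))
              (fun x => x ^ 2 * cos x ^ (2 * m))).
  apply ex_Ic. apply ex_Jc. apply ex_Jc.
  apply (FTC' (fun x => x * cos x ^ S (S (2 * m)) + INR (S m) * (x ^ 2 * (sin x * cos x ^ S (2 * m))))).
  - intros x _. eapply is_derive_val. apply der2.
    { rewrite !S_INR, !mult_INR. simpl INR. ring. }
    { rewrite !S_INR, !mult_INR. simpl INR. match goal with |- ?a = ?b => change (@eq R a b) end. ring. }
  - intros x _. apply cont_of_der. auto_derive. auto.
  - rewrite cos_PI2', sin_0. rewrite !pow_i by lia. ring.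
Qed.

Ltac Rring := match goal with |- ?a = ?b => change (@eq R a b) end; ring.
Ltac Rfield := match goal with |- ?a = ?b => change (@eq R a b) end; field.

Lemma RInt_R (f : R -> R) a b v : is_RInt f a b v -> RInt f a b = v.
Proof. intros H. exact (is_RInt_unique (V:=R_CompleteNormedModule) f a b v H). Qed.

Lemma Ic_0 : Ic 0 = PI / 2.
Proof.
  unfold Ic. apply RInt_R. apply (FTC' (fun x => x)).
  - intros x _. auto_derive. auto. simpl. Rring.
  - intros x _. apply cont_of_der. auto_derive. auto.
  - ring.
Qed.

Lemma Jc_0 : Jc 0 = PI ^ 3 / 24.
Proof.
  unfold Jc. apply RInt_R. apply (FTC' (fun x => x ^ 3 / 3)).
  - intros x _. auto_derive. auto. simpl. Rfield.
  - intros x _. apply cont_of_der. auto_derive. auto.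
  - field.
Qed.

Lemma Ic_rec m : Ic (S m) = INR (2 * m + 1) / INR (2 * m + 2) * Ic m.
Proof.
  pose proof (B1 m). assert (0 < INR (2 * m + 2)) by (apply lt_0_INR; lia).
  replace (Ic (S m)) with (/ INR (2 * m + 2) * (INR (2 * m + 2) * Ic (S m))) by (field; lra).
  replace (INR (2 * m + 2) * Ic (S m)) with (INR (2 * m + 1) * Ic m) by lra. field. lra.
Qed.

Lemma Ic_pos n : 0 < Ic n.
Proof.
  induction n.
  - rewrite Ic_0. pose proof PI_RGT_0. lra.
  - rewrite Ic_rec. apply Rmult_lt_0_compat; auto.
    apply Rdiv_lt_0_compat; apply lt_0_INR; lia.
Qed.

Lemma Jc_nonneg n : 0 <= Jc n.
Proof.
  unfold Jc. apply RInt_ge_0. pose proof PI_RGT_0; lra. apply ex_Jc.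
  intros x _. apply Rmult_le_pos. apply pow2_ge_0. rewrite pow_mult. apply pow_le, pow2_ge_0.
Qed.

Lemma x2_sin x : 0 <= x <= PI / 2 -> x ^ 2 <= 16 * sin x ^ 2.
Proof.
  intros Hx. pose proof PI_4. pose proof (SIN x).
  assert (Hs : sin_lb x <= sin x) by (apply H0; lra).
  assert (E : sin_lb x = x - x^3/6 + x^5/120 - x^7/5040).
  { unfold sin_lb, sin_approx, sin_term. simpl. field. }
  rewrite E in Hs.
  assert (x * x <= 4) by nra.
  assert (x ^ 3 <= 4 * x) by (simpl; nra).
  assert (x ^ 7 <= 64 * x).
  { replace (x ^ 7) with (x * (x * x) * (x * x) * (x * x)) by ring.
    assert (0 <= x * x) by nra.
    assert ((x * x) * (x * x) <= 16) by nra.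
    assert ((x * x) * (x * x) * (x * x) <= 64) by nra. nra. }
  assert (0 <= x ^ 5) by (apply pow_le; lra).
  assert (x / 4 <= sin x) by lra.
  nra.
Qed.

Lemma Jc_bound n : Jc n <= 16 * (Ic n - Ic (S n)).
Proof.
  assert (E : 16 * (Ic n - Ic (S n)) = RInt (fun x => 16 * sin x ^ 2 * cos x ^ (2 * n)) 0 (PI / 2)).
  { symmetry. apply RInt_R. unfold Ic.
    replace (2 * S n)%nat with (2 * n + 2)%nat by lia.
    replace (16 * (RInt (fun x => cos x ^ (2 * n)) 0 (PI / 2) - RInt (fun x => cos x ^ (2 * n + 2)) 0 (PI / 2)))
      with (16 * RInt (fun x => cos x ^ (2 * n)) 0 (PI / 2) + (-16) * RInt (fun x => cos x ^ (2 * n + 2)) 0 (PI / 2)) by ring.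
    rewrite (lin2 (fun x => cos x ^ (2 * n)) (fun x => cos x ^ (2 * n + 2)) 0 (PI/2) 16 (-16)
      (RInt (fun x => 16 * sin x ^ 2 * cos x ^ (2 * n)) 0 (PI / 2))).
    - apply (RInt_correct (V:=R_CompleteNormedModule)).
      apply (ex_RInt_continuous (V:=R_CompleteNormedModule)). intros z _. apply cont_of_der. auto_derive. auto.
    - apply ex_Ic.
    - apply ex_Ic.
    - apply (is_RInt_ext (V:=R_NormedModule) (fun x => 16 * sin x ^ 2 * cos x ^ (2 * n))).
      intros x _. rewrite sin2, pow_add. Rring.
      apply (RInt_correct (V:=R_CompleteNormedModule)).
      apply (ex_RInt_continuous (V:=R_CompleteNormedModule)). intros z _. apply cont_of_der. auto_derive. auto. }
  rewrite E. unfold Jc. apply RInt_le. pose proof PI_RGT_0; lra. apply ex_Jc.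
  apply (ex_RInt_continuous (V:=R_CompleteNormedModule)). intros z _. apply cont_of_der. auto_derive. auto.
  intros x Hx. apply Rmult_le_compat_r. rewrite pow_mult. apply pow_le, pow2_ge_0.
  apply x2_sin. lra.
Qed.

Definition sJ (n : nat) : R := Jc n / Ic n.

Lemma s_step m : sJ m - sJ (S m) = / (2 * INR (S m) ^ 2).
Proof.
  pose proof (B2 m) as H2. pose proof (Ic_rec m) as Hr.
  pose proof (Ic_pos m). pose proof (Ic_pos (S m)).
  replace (INR (2 * m + 1)) with (INR (S (2 * m))) in Hr by (f_equal; lia).
  replace (INR (2 * m + 2)) with (2 * INR (S m)) in Hr by (rewrite S_INR, plus_INR, mult_INR; simpl; ring).
  set (a := INR (S m)) in *. set (b := INR (S (2 * m))) in *.
  assert (Ha : 0 < a) by (apply lt_0_INR; lia).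
  assert (Hb : 0 < b) by (apply lt_0_INR; lia).
  assert (HJ : Jc (S m) = (a * b * Jc m - Ic (S m)) / (2 * a ^ 2)).
  { apply (Rmult_eq_reg_l (2 * a ^ 2)). field_simplify. lra. nra. nra. }
  unfold sJ. rewrite HJ. rewrite Hr. field. repeat split; nra.
Qed.

Lemma sJ_0 : sJ 0 = PI ^ 2 / 12.
Proof. unfold sJ. rewrite Jc_0, Ic_0. field. pose proof PI_RGT_0. lra. Qed.

Lemma sum_sJ n : sum_n (fun k => / INR (S k) ^ 2) n = 2 * (sJ 0 - sJ (S n)).
Proof.
  induction n.
  - rewrite sum_O. rewrite (s_step 0). simpl. field.
  - rewrite sum_Sn, IHn. pose proof (s_step (S n)).
    change (plus (2 * (sJ 0 - sJ (S n))) (/ INR (S (S n)) ^ 2)) with (2 * (sJ 0 - sJ (S n)) + / INR (S (S n)) ^ 2).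
    replace (sJ 0 - sJ (S (S n))) with ((sJ 0 - sJ (S n)) + (sJ (S n) - sJ (S (S n)))) by ring.
    rewrite H. Rfield. apply Rgt_not_eq. apply lt_0_INR. lia.
Qed.

Lemma sJ_bound n : 0 <= sJ n <= 8 / INR (S n).
Proof.
  pose proof (Ic_pos n). pose proof (Jc_nonneg n). pose proof (Jc_bound n).
  rewrite Ic_rec in H1.
  assert (0 < INR (S n)) by (apply lt_0_INR; lia).
  replace (INR (2 * n + 2)) with (2 * INR (S n)) in H1 by (rewrite S_INR, plus_INR, mult_INR; simpl; ring).
  replace (INR (2 * n + 1)) with (2 * INR (S n) - 1) in H1 by (rewrite S_INR, plus_INR, mult_INR; simpl; ring).
  unfold sJ. split.
  - apply Rdiv_le_0_compat; lra.
  - apply (Rmult_le_reg_r (Ic n)); auto. field_simplify; try lra.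
    replace (Ic n - (2 * INR (S n) - 1) / (2 * INR (S n)) * Ic n) with (Ic n / (2 * INR (S n))) in H1 by (field; lra).
    apply (Rmult_le_reg_r (INR (S n))); auto. field_simplify; try lra.
    replace (16 * (Ic n / (2 * INR (S n)))) with (8 * Ic n / INR (S n)) in H1 by (field; lra).
    apply (Rmult_le_compat_r (INR (S n))) in H1; [|lra].
    replace (8 * Ic n / INR (S n) * INR (S n)) with (8 * Ic n) in H1 by (field; lra). lra.
Qed.

Lemma Basel : is_series (fun k => / INR (S k) ^ 2) (PI ^ 2 / 6).
Proof.
  assert (H : is_lim_seq (sum_n (fun k => / INR (S k) ^ 2)) (PI ^ 2 / 6)).
  { apply is_lim_seq_le_le with (fun n => PI ^ 2 / 6 - 16 * / INR (S (S n))) (fun n => PI ^ 2 / 6).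
    - intros n. rewrite sum_sJ, sJ_0. pose proof (sJ_bound (S n)). unfold Rdiv in *. lra.
    - replace (Finite (PI ^ 2 / 6)) with (Finite (PI ^ 2 / 6 - 16 * 0)) by (f_equal; ring).
      apply is_lim_seq_minus'. apply is_lim_seq_const.
      apply (is_lim_seq_scal_l _ 16 0).
      replace (Finite 0) with (Rbar_inv p_infty) by reflexivity.
      apply is_lim_seq_inv. 2: discriminate.
      apply is_lim_seq_ext with (fun n => INR (n + 2)).
      intros n; f_equal; lia.
      apply (is_lim_seq_incr_n INR 2). apply is_lim_seq_INR.
    - apply is_lim_seq_const. }
  exact H.
Qed.

Lemma Li2_1 : Li2 1 = PI ^ 2 / 6.
Proof.
  unfold Li2. apply is_series_unique.
  apply is_series_ext with (fun k => / INR (S k) ^ 2).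
  intros n. rewrite pow1. unfold Rdiv. Rring.
  apply Basel.
Qed.

Lemma ex_pseries_la : ex_pseries la 1.
Proof.
  unfold la. apply ex_pseries_incr_1.
  exists (PI ^ 2 / 6).
  apply is_series_ext with (fun k => / INR (S k) ^ 2).
  intros n. transitivity (1 ^ n * lb n). rewrite pow1; unfold lb; Rring. unfold scal; simpl. unfold mult; simpl. rewrite <- pow_n_pow. reflexivity.
  apply Basel.
Qed.

Lemma Abel_Li2 : forall eps : posreal, exists d : posreal,
  forall y, 1 - d < y < 1 -> Rabs (Li2 y - Li2 1) < eps.
Proof.
  intros eps.
  assert (H := Abel la).
  rewrite CV_la in H. specialize (H ltac:(simpl; lra) ltac:(simpl; auto) ex_pseries_la).
  apply filterlim_locally with (eps := eps) in H.
  destruct H as [d Hd]. exists d. intros y Hy.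
  rewrite !Li2_PS. apply Hd.
  - unfold ball; simpl; unfold AbsRing_ball, abs, minus, plus, opp; simpl.
    rewrite Rabs_left; lra.
  - exact (proj2 Hy).
Qed.

Lemma Li2_near0 : forall eps : posreal, exists d : posreal,
  forall y, Rabs y < d -> Rabs (Li2 y) < eps.
Proof.
  intros eps.
  assert (H : continuity_pt (PSeries la) 0).
  { apply PSeries_continuity. rewrite CV_la, Rabs_R0. simpl. lra. }
  apply continuity_pt_filterlim in H.
  apply filterlim_locally with (eps := eps) in H.
  destruct H as [d Hd]. exists d. intros y Hy.
  assert (Hb : ball 0 d y) by (unfold ball; simpl; unfold AbsRing_ball, abs, minus, plus, opp; simpl; rewrite Ropp_0, Rplus_0_r; exact Hy).
  specialize (Hd y Hb).
  replace (PSeries la 0) with 0 in Hd by (rewrite <- Li2_PS; symmetry; apply Li2_0).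
  unfold ball in Hd; simpl in Hd; unfold AbsRing_ball, abs, minus, plus, opp in Hd; simpl in Hd.
  rewrite Ropp_0, Rplus_0_r in Hd. rewrite Li2_PS. exact Hd.
Qed.

Lemma ln_le y : 0 < y -> ln y <= y - 1.
Proof. intros Hy. pose proof (exp_ineq1_le (ln y)). rewrite exp_ln in H; auto. lra. Qed.

Lemma lnx_ln1x x : 0 < x <= 1/2 -> Rabs (ln x * ln (1 - x)) <= 4 * sqrt x.
Proof.
  intros Hx.
  assert (Hs : 0 < sqrt x) by (apply sqrt_lt_R0; lra).
  assert (Hss : sqrt x * sqrt x = x) by (apply sqrt_sqrt; lra).
  assert (A1 : 0 <= - ln (1 - x) <= 2 * x).
  { split.
    - assert (ln (1 - x) <= ln 1). { destruct (Rle_lt_or_eq_dec x x). lra.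
        left. apply ln_increasing; lra. left. apply ln_increasing; lra. }
      rewrite ln_1 in H. lra.
    - rewrite <- ln_Rinv by lra. pose proof (ln_le (/ (1 - x)) ltac:(apply Rinv_0_lt_compat; lra)).
      assert (/ (1 - x) - 1 <= 2 * x).
      { replace (/ (1 - x) - 1) with (x / (1 - x)) by (field; lra).
        apply (Rmult_le_reg_r (1 - x)). lra. field_simplify; nra. }
      lra. }
  assert (A2 : 0 <= - ln x <= 2 / sqrt x).
  { split.
    - assert (ln x < ln 1) by (apply ln_increasing; lra). rewrite ln_1 in H. lra.
    - replace (- ln x) with (2 * ln (/ sqrt x)).
      + pose proof (ln_le (/ sqrt x) ltac:(apply Rinv_0_lt_compat; lra)).
        unfold Rdiv. assert (0 < / sqrt x) by (apply Rinv_0_lt_compat; lra). lra.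
      + rewrite ln_Rinv by lra. rewrite <- Hss at 2. rewrite ln_mult by lra. ring. }
  rewrite Rabs_pos_eq by nra.
  replace (ln x * ln (1 - x)) with ((- ln x) * (- ln (1 - x))) by ring.
  apply Rle_trans with ((2 / sqrt x) * (2 * x)).
  - apply Rmult_le_compat; lra.
  - right. replace (2 * x) with (2 * (sqrt x * sqrt x)) by (rewrite Hss; ring). field. lra.
Qed.

Definition Rf (x : R) : R := Li2 x + Li2 (1 - x) + ln x * ln (1 - x).

Lemma Rf_deriv t : 0 < t < 1 -> is_derive Rf t 0.
Proof.
  intros Ht.
  assert (H1 : is_derive Li2 t (L1 t)) by (apply Li2_deriv; apply Rabs_def1; lra).
  assert (H2 : is_derive (fun x => Li2 (1 - x)) t (scal (-1) (L1 (1 - t)))).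
  { apply (is_derive_comp Li2 (fun x => 1 - x)).
    apply Li2_deriv; apply Rabs_def1; lra.
    auto_derive. auto. ring. }
  assert (H3 : is_derive (fun x => ln x * ln (1 - x)) t (/ t * ln (1 - t) + ln t * (-1 / (1 - t)))).
  { auto_derive. lra. unfold Rminus. field. lra. }
  pose proof (L1_ln t ltac:(apply Rabs_def1; lra)) as E1.
  pose proof (L1_ln (1 - t) ltac:(apply Rabs_def1; lra)) as E2.
  replace (1 - (1 - t)) with t in E2 by ring.
  unfold Rf.
  eapply is_derive_val.
  apply (is_derive_plus (fun x => Li2 x + Li2 (1 - x)) (fun x => ln x * ln (1 - x))).
  apply (is_derive_plus Li2 (fun x => Li2 (1 - x))). exact H1. exact H2. exact H3.
  unfold scal, plus; simpl; unfold mult; simpl.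
  assert (L1 t = - ln (1 - t) / t) by (apply (Rmult_eq_reg_l t); [field_simplify; lra | lra]).
  assert (L1 (1 - t) = - ln t / (1 - t)) by (apply (Rmult_eq_reg_l (1 - t)); [field_simplify; lra | lra]).
  rewrite H, H0. field. lra.
Qed.

Lemma Li2_half : Li2 (1/2) = PI ^ 2 / 12 - ln 2 ^ 2 / 2.
Proof.
  assert (Hc : forall x, 0 < x <= 1/2 -> Rf x = Rf (1/2)).
  { intros x Hx. apply const_deriv. lra. intros t Ht. apply Rf_deriv. lra. }
  assert (Hlim : Rf (1/2) = Li2 1).
  { apply Rminus_diag_uniq. apply Rabs_eq_0.
    apply Rle_antisym; [| apply Rabs_pos].
    apply Rnot_lt_le. intros Hpos.
    set (e := Rabs (Rf (1/2) - Li2 1) / 3).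
    assert (He : 0 < e) by (unfold e; lra).
    destruct (Li2_near0 (mkposreal e He)) as [d1 Hd1].
    destruct (Abel_Li2 (mkposreal e He)) as [d2 Hd2].
    simpl in Hd1, Hd2.
    set (x := Rmin (Rmin (1/2) (d1/2)) (Rmin (d2/2) ((e/8)^2))).
    assert (Hx0 : 0 < x).
    { unfold x. pose proof (cond_pos d1). pose proof (cond_pos d2).
      repeat apply Rmin_glb_lt; try lra. apply pow_lt; lra. }
    assert (Hx1 : x <= 1/2) by (unfold x; eapply Rle_trans; [apply Rmin_l| apply Rmin_l]).
    assert (Hx2 : x < d1).
    { unfold x. eapply Rle_lt_trans; [apply Rmin_l|]. eapply Rle_lt_trans; [apply Rmin_r|].
      pose proof (cond_pos d1). lra. }
    assert (Hx3 : x < d2).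
    { unfold x. eapply Rle_lt_trans; [apply Rmin_r|]. eapply Rle_lt_trans; [apply Rmin_l|].
      pose proof (cond_pos d2). lra. }
    assert (Hx4 : x <= (e/8)^2) by (unfold x; eapply Rle_trans; [apply Rmin_r| apply Rmin_r]).
    specialize (Hd1 x ltac:(rewrite Rabs_pos_eq; lra)).
    specialize (Hd2 (1 - x) ltac:(lra)).
    pose proof (lnx_ln1x x ltac:(lra)) as Hl.
    assert (sqrt x <= e / 8).
    { rewrite <- (sqrt_pow2 (e/8)) by lra. apply sqrt_le_1; lra. }
    assert (Rabs (Rf (1/2) - Li2 1) <= Rabs (Li2 x) + Rabs (Li2 (1 - x) - Li2 1) + Rabs (ln x * ln (1 - x))).
    { rewrite <- (Hc x ltac:(lra)). unfold Rf. replace (Li2 x + Li2 (1 - x) + ln x * ln (1 - x) - Li2 1)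
        with (Li2 x + (Li2 (1 - x) - Li2 1) + ln x * ln (1 - x)) by ring.
      eapply Rle_trans. apply Rabs_triang. apply Rplus_le_compat_r. apply Rabs_triang. }
    assert (e * 3 = Rabs (Rf (1/2) - Li2 1)) by (unfold e; field).
    lra. }
  unfold Rf in Hlim. rewrite Li2_1 in Hlim.
  replace (1 - 1/2) with (1/2) in Hlim by field.
  replace (ln (1/2)) with (- ln 2) in Hlim.
  - lra.
  - unfold Rdiv. rewrite Rmult_1_l, ln_Rinv; lra.
Qed.

Lemma param_deriv (f fd : R -> R -> R) (a b r : R) :
  (forall u t, Rabs u < 1 -> is_derive (fun z => f z t) u (fd u t)) ->
  (forall u t, Rabs u < 1 -> continuity_2d_pt fd u t) ->
  (forall u t, Rabs u < 1 -> continuous (f u) t) ->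
  Rabs r < 1 ->
  is_derive (fun u => RInt (f u) a b) r (RInt (fd r) a b).
Proof.
  intros Hd Hc Hf Hr.
  assert (Hdel : 0 < 1 - Rabs r) by lra.
  set (del := mkposreal _ Hdel).
  assert (Hloc : forall u, Rabs (u - r) < del -> Rabs u < 1).
  { intros u Hu. simpl in Hu. pose proof (Rabs_triang_inv u r). 
    assert (Rabs u - Rabs r < 1 - Rabs r).
    { eapply Rle_lt_trans; [| exact Hu]. apply Rabs_triang_inv. }
    lra. }
  assert (E : RInt (fd r) a b = RInt (fun t => Derive (fun u => f u t) r) a b).
  { apply RInt_ext. intros t _. symmetry. apply is_derive_unique. apply Hd. exact Hr. }
  rewrite E.
  apply (is_derive_RInt_param f a b r).
  - exists del. intros y Hy t _. exists (fd y t). apply Hd. apply Hloc. exact Hy.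
  - intros t _. apply continuity_2d_pt_ext_loc with fd.
    + exists del. intros u v Hu _. symmetry. apply is_derive_unique. apply Hd. apply Hloc. exact Hu.
    + apply Hc. exact Hr.
  - exists del. intros y Hy. apply (ex_RInt_continuous (V:=R_CompleteNormedModule)).
    intros z _. apply Hf. apply Hloc. exact Hy.
Qed.

Ltac cont2 :=
  repeat first
   [ apply continuity_2d_pt_id1
   | apply continuity_2d_pt_id2
   | apply continuity_2d_pt_const
   | apply continuity_2d_pt_mult
   | apply continuity_2d_pt_plus
   | apply continuity_2d_pt_minus
   | apply continuity_2d_pt_opp
   | apply (continuity_1d_2d_pt_comp cos); [apply continuity_cos|]
   | apply (continuity_1d_2d_pt_comp sin); [apply continuity_sin|]
   | apply continuity_2d_pt_inv ].

Lemma D_pos u t : Rabs u < 1 -> 0 < 1 - 2 * u * cos t + u * u.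
Proof.
  intros Hu. pose proof (COS_bound t). apply Rabs_def2 in Hu.
  destruct (Rle_dec 0 u); nra.
Qed.

Definition gK (u t : R) : R := t * (u * cos t - u * u) / (1 - 2 * u * cos t + u * u).
Definition gKd (u t : R) : R := t * (cos t - 2 * u + u * u * cos t) * / ((1 - 2 * u * cos t + u * u) * (1 - 2 * u * cos t + u * u)).

Lemma gK_der u t : Rabs u < 1 -> is_derive (fun z => gK z t) u (gKd u t).
Proof.
  intros Hu. pose proof (D_pos u t Hu). unfold gK, gKd.
  auto_derive. lra. Rfield. lra.
Qed.

Lemma gKd_cont u t : Rabs u < 1 -> continuity_2d_pt gKd u t.
Proof.
  intros Hu. pose proof (D_pos u t Hu). unfold gKd. cont2. nra.
Qed.

Lemma KD_val r : Rabs r < 1 ->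
  RInt (gKd r) 0 (PI / 2) = PI / 2 / (1 + r * r) - r / 2 * L1 (- (r * r)) - L1 r.
Proof.
  intros Hr.
  destruct (Req_dec r 0) as [H0|H0].
  - subst r. rewrite L1_0. replace (- (0 * 0)) with 0 by ring. rewrite L1_0.
    apply RInt_R. apply (FTC' (fun t => t * sin t + cos t)).
    + intros x _. auto_derive. auto. unfold gKd. Rfield. 
    + intros x _. apply cont_of_der. unfold gKd. auto_derive. 
      intro Hc. ring_simplify in Hc. lra.
    + rewrite sin_PI2, cos_PI2', sin_0, cos_0. field.
  - assert (Hl1 := L1_ln r Hr).
    assert (Hl2 := L1_ln (- (r * r)) ltac:(rewrite Rabs_Ropp, Rabs_pos_eq; apply Rabs_def2 in Hr; nra)).
    apply RInt_R.
    apply (FTC' (fun t => t * sin t / (1 - 2 * r * cos t + r * r) - ln (1 - 2 * r * cos t + r * r) / (2 * r))).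
    + intros x _. pose proof (D_pos r x Hr). auto_derive. repeat split; lra.
      unfold gKd. pose proof (sin2 x). apply Rminus_diag_uniq.
      match goal with |- ?a = 0 => change (@eq R a 0) end. field_simplify. 2: repeat split; lra.
      replace (sin x ^ 2) with (1 - cos x ^ 2) by lra. unfold Rdiv. apply Rmult_eq_0_compat_r. ring.
    + intros x _. pose proof (D_pos r x Hr). apply cont_of_der. unfold gKd. auto_derive. 
      apply Rmult_integral_contrapositive; split; lra.
    + rewrite sin_PI2, cos_PI2', sin_0, cos_0.
      replace (1 - 2 * r * 0 + r * r) with (1 + r * r) by ring.
      replace (1 - 2 * r * 1 + r * r) with ((1 - r) * (1 - r)) by ring.
      apply Rabs_def2 in Hr.
      rewrite ln_mult by lra.
      replace (- (r * r)) with (- (r * r)) by ring.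
      replace (1 - - (r * r)) with (1 + r * r) in Hl2 by ring.
      apply (Rmult_eq_reg_l r); auto. field_simplify; try lra.
      replace (ln (1 - r)) with (- (r * L1 r)) by lra.
      replace (ln (1 + r * r)) with (r * r * L1 (- (r * r))) by lra.
      field. all: repeat split; try nra.
      all: replace (2 * r ^ 4 - 4 * r ^ 3 + 4 * r ^ 2 - 4 * r + 2) with (2 * (r * r + 1) * ((1 - r) * (1 - r))) by ring; apply Rgt_not_eq; apply Rmult_lt_0_compat; nra.
Qed.

Lemma gK_cont u t : Rabs u < 1 -> continuous (gK u) t.
Proof.
  intros Hu. pose proof (D_pos u t Hu). apply cont_of_der. unfold gK. auto_derive. lra.
Qed.

Lemma K_deriv r : Rabs r < 1 ->
  is_derive (fun u => RInt (gK u) 0 (PI / 2)) r (PI / 2 / (1 + r * r) - r / 2 * L1 (- (r * r)) - L1 r).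
Proof.
  intros Hr. rewrite <- KD_val by exact Hr.
  apply param_deriv; auto.
  - apply gK_der. - apply gKd_cont. - apply gK_cont.
Qed.

Lemma atan_der x : is_derive atan x (/ (1 + x * x)).
Proof.
  apply is_derive_Reals. replace (1 + x * x) with (1 + x ^ 2) by ring. apply derivable_pt_lim_atan.
Qed.

Definition AK (r : R) : R := PI / 2 * atan r + / 4 * Li2 (- (r * r)) - Li2 r.

Lemma AK_deriv r : Rabs r < 1 ->
  is_derive AK r (PI / 2 / (1 + r * r) - r / 2 * L1 (- (r * r)) - L1 r).
Proof.
  intros Hr. unfold AK.
  assert (Hr2 : Rabs (- (r * r)) < 1).
  { rewrite Rabs_Ropp, Rabs_pos_eq. apply Rabs_def2 in Hr; nra. nra. }
  eapply is_derive_val.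
  apply (is_derive_minus (fun x => PI / 2 * atan x + / 4 * Li2 (- (x * x))) Li2).
  apply (is_derive_plus (fun x => PI / 2 * atan x) (fun x => / 4 * Li2 (- (x * x)))).
  apply (is_derive_scal atan). apply atan_der.
  apply (is_derive_scal (fun x => Li2 (- (x * x)))).
  apply (is_derive_comp Li2 (fun x => - (x * x))). apply Li2_deriv; auto.
  auto_derive. auto. reflexivity.
  apply Li2_deriv; auto.
  unfold scal, minus, plus, opp; simpl. unfold mult; simpl. field. nra.
Qed.

Lemma K_half : RInt (gK (1/2)) 0 (PI / 2) = AK (1/2).
Proof.
  assert (E : RInt (gK 0) 0 (PI / 2) - AK 0 = RInt (gK (1/2)) 0 (PI / 2) - AK (1/2)).
  { apply (const_deriv (fun r => RInt (gK r) 0 (PI / 2) - AK r)). lra.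
    intros t Ht. eapply is_derive_val.
    apply (is_derive_minus (fun r => RInt (gK r) 0 (PI / 2)) AK).
    apply K_deriv. apply Rabs_def1; lra. apply AK_deriv. apply Rabs_def1; lra.
    unfold minus, plus, opp; simpl. ring. }
  assert (E0 : RInt (gK 0) 0 (PI / 2) = 0).
  { rewrite (RInt_ext _ (fun _ => 0)). rewrite RInt_const. unfold scal; simpl; unfold mult; simpl. ring.
    intros x _. unfold gK. field_simplify; try lra. }
  assert (A0 : AK 0 = 0).
  { unfold AK. rewrite atan_0. replace (- (0 * 0)) with 0 by ring. rewrite Li2_0. ring. }
  rewrite E0, A0 in E. lra.
Qed.

Definition ft (y : R) : R := if Req_dec_T y 0 then 1 else atan y / y.

Lemma ft_cont y : continuous ft y.
Proof.
  destruct (Req_dec_T y 0) as [H0|H0].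
  - subst y. apply filterlim_locally. intros eps.
    destruct (derivable_pt_lim_atan 0 eps (cond_pos eps)) as [d Hd].
    exists d. intros y Hy.
    unfold ball; simpl; unfold AbsRing_ball, abs, minus, plus, opp; simpl.
    unfold ft. destruct (Req_dec_T 0 0) as [_|C]; [|congruence].
    destruct (Req_dec_T y 0) as [Hy0|Hy0].
    + rewrite Rplus_opp_r, Rabs_R0. apply cond_pos.
    + assert (Hy' : Rabs y < d).
      { unfold ball in Hy; simpl in Hy; unfold AbsRing_ball, abs, minus, plus, opp in Hy; simpl in Hy.
        rewrite Ropp_0, Rplus_0_r in Hy. exact Hy. }
      specialize (Hd y Hy0 Hy'). rewrite Rplus_0_l, atan_0, Rminus_0_r in Hd.
      replace (/ (1 + 0 ^ 2)) with 1 in Hd by (simpl; field).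
      exact Hd.
  - apply (continuous_ext_loc (T:=R_UniformSpace) (U:=R_UniformSpace) ft (fun x => atan x / x)).
    + assert (Hd : 0 < Rabs y) by (apply Rabs_pos_lt; auto).
      exists (mkposreal _ Hd). intros x Hx.
      unfold ball in Hx; simpl in Hx; unfold AbsRing_ball, abs, minus, plus, opp in Hx; simpl in Hx.
      unfold ft. destruct (Req_dec_T x 0) as [Hx0|Hx0]; auto.
      subst x. rewrite Rplus_0_l, Rabs_Ropp in Hx. lra.
    + apply cont_of_der. auto_derive. exact H0.
Qed.

Definition gN (u t : R) : R := t * (u * sin t) / (1 - 2 * u * cos t + u * u).
Definition gNd (u t : R) : R := t * (sin t * (1 - u * u)) * / ((1 - 2 * u * cos t + u * u) * (1 - 2 * u * cos t + u * u)).

Lemma gN_der u t : Rabs u < 1 -> is_derive (fun z => gN z t) u (gNd u t).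
Proof.
  intros Hu. pose proof (D_pos u t Hu). unfold gN, gNd.
  auto_derive. lra. Rfield. lra.
Qed.

Lemma gNd_cont u t : Rabs u < 1 -> continuity_2d_pt gNd u t.
Proof.
  intros Hu. pose proof (D_pos u t Hu). unfold gNd. cont2. nra.
Qed.

Lemma gN_cont u t : Rabs u < 1 -> continuous (gN u) t.
Proof.
  intros Hu. pose proof (D_pos u t Hu). apply cont_of_der. unfold gN. auto_derive. lra.
Qed.

Lemma ND_val r : Rabs r < 1 ->
  RInt (gNd r) 0 (PI / 2) = PI / 2 * r / (1 + r * r) + ft r.
Proof.
  intros Hr. unfold ft.
  destruct (Req_dec_T r 0) as [H0|H0].
  - subst r.
    apply RInt_R. apply (FTC' (fun t => sin t - t * cos t)).
    + intros x _. auto_derive. auto. unfold gNd. Rfield.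
    + intros x _. apply cont_of_der. unfold gNd. auto_derive.
      intro Hc. ring_simplify in Hc. lra.
    + rewrite sin_PI2, cos_PI2', sin_0, cos_0. field.
  - apply RInt_R.
    assert (Hc1 : forall t, 0 < 1 - r * cos t).
    { intros t. pose proof (COS_bound t). apply Rabs_def2 in Hr. destruct (Rle_dec 0 r); nra. }
    apply (FTC' (fun t => t * (r - cos t) / (1 - 2 * r * cos t + r * r) + atan (r * sin t / (1 - r * cos t)) / r)).
    + intros x _. pose proof (D_pos r x Hr). pose proof (Hc1 x). auto_derive. repeat split; lra.
      unfold gNd. pose proof (sin2 x). apply Rminus_diag_uniq.
      match goal with |- ?a = 0 => change (@eq R a 0) end. field_simplify.
      replace (sin x ^ 2) with (1 - cos x ^ 2) by lra. unfold Rdiv. apply Rmult_eq_0_compat_r. ring.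
      all: repeat split; try lra.
      all: try (apply Rmult_integral_contrapositive; split; lra).
      apply Rgt_not_eq. nra.
    + intros x _. pose proof (D_pos r x Hr). apply cont_of_der. unfold gNd. auto_derive.
      apply Rmult_integral_contrapositive; split; lra.
    + rewrite sin_PI2, cos_PI2', sin_0, cos_0.
      replace (1 - 2 * r * 0 + r * r) with (1 + r * r) by ring.
      replace (r * 0 / (1 - r * 1)) with 0 by (field; apply Rabs_def2 in Hr; lra).
      rewrite atan_0. replace (r * 1 / (1 - r * 0)) with r by field.
      field. apply Rabs_def2 in Hr. repeat split; auto; nra.
Qed.

Lemma N_deriv r : Rabs r < 1 ->
  is_derive (fun u => RInt (gN u) 0 (PI / 2)) r (PI / 2 * r / (1 + r * r) + ft r).
Proof.
  intros Hr. rewrite <- ND_val by exact Hr.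
  apply param_deriv; auto.
  - apply gN_der. - apply gNd_cont. - apply gN_cont.
Qed.

Lemma ex_ft a b : ex_RInt ft a b.
Proof. apply (ex_RInt_continuous (V:=R_CompleteNormedModule)). intros z _. apply ft_cont. Qed.

Lemma der_RInt_ft r : is_derive (fun b => RInt ft 0 b) r (ft r).
Proof.
  apply (is_derive_RInt (V:=R_CompleteNormedModule) ft (fun b => RInt ft 0 b) 0 r).
  - exists (mkposreal 1 Rlt_0_1). intros y _.
    apply (RInt_correct (V:=R_CompleteNormedModule)). apply ex_ft.
  - apply ft_cont.
Qed.

Definition BN (r : R) : R := PI / 4 * ln (1 + r * r) + RInt ft 0 r.

Lemma BN_deriv r : is_derive BN r (PI / 2 * r / (1 + r * r) + ft r).
Proof.
  unfold BN. eapply is_derive_val.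
  apply (is_derive_plus (fun x => PI / 4 * ln (1 + x * x)) (fun b => RInt ft 0 b)).
  auto_derive. nra. reflexivity. apply der_RInt_ft.
  unfold plus; simpl. field. nra.
Qed.

Lemma N_half : RInt (gN (1/2)) 0 (PI / 2) = BN (1/2).
Proof.
  assert (E : RInt (gN 0) 0 (PI / 2) - BN 0 = RInt (gN (1/2)) 0 (PI / 2) - BN (1/2)).
  { apply (const_deriv (fun r => RInt (gN r) 0 (PI / 2) - BN r)). lra.
    intros t Ht. eapply is_derive_val.
    apply (is_derive_minus (fun r => RInt (gN r) 0 (PI / 2)) BN).
    apply N_deriv. apply Rabs_def1; lra. apply BN_deriv.
    unfold minus, plus, opp; simpl. ring. }
  assert (E0 : RInt (gN 0) 0 (PI / 2) = 0).
  { rewrite (RInt_ext _ (fun _ => 0)). rewrite RInt_const. unfold scal; simpl; unfold mult; simpl. ring.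
    intros x _. unfold gN. field_simplify; try lra. }
  assert (B0 : BN 0 = 0).
  { unfold BN. replace (1 + 0 * 0) with 1 by ring. rewrite ln_1, RInt_point. unfold zero; simpl. ring. }
  rewrite E0, B0 in E. lra.
Qed.



Theorem proposition1 :
  RInt (fun phi => phi * (2 * cos phi - 1) / (5 - 4 * cos phi)) 0 (PI / 2)
    = - (1 / 12) * PI ^ 2 + (1 / 2) * (ln 2) ^ 2 + (PI / 2) * atan (1 / 2)
      + (1 / 4) * Li2 (- (1 / 4))
  /\
  RInt (fun phi => 2 * phi * sin phi / (5 - 4 * cos phi)) 0 (PI / 2)
    = (PI / 4) * ln (5 / 4) + Ti2 (1 / 2).
Proof.
  split.
  - rewrite (RInt_ext _ (gK (1/2))).
    + rewrite K_half. unfold AK. rewrite Li2_half.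
      replace (- (1 / 2 * (1 / 2))) with (- (1 / 4)) by field. Rfield.
    + intros x _. pose proof (COS_bound x). unfold gK. Rfield. lra.
  - rewrite (RInt_ext _ (gN (1/2))).
    + rewrite N_half. unfold BN, Ti2.
      rewrite (RInt_ext (fun y => atan y / y) ft).
      * replace (1 + 1 / 2 * (1 / 2)) with (5 / 4) by field. reflexivity.
      * intros y Hy. unfold ft. destruct (Req_dec_T y 0) as [H0|H0]; auto.
        rewrite Rmin_left in Hy by lra. lra.
    + intros x _. pose proof (COS_bound x). unfold gN. Rfield. lra.
Qed.
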